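(* There exist a nondeterministic probabilistic automaton $\mathcal{B}$, a regular predicate $\varphi$ and an observation function $\mathcal{O}$ such that the value $\widehat{\mathrm{PO}^A_r}(\mathcal{B},\varphi,\mathcal{O}) = \min_{\sigma} \mathrm{PO}^A_r(\mathcal{B}_{/\sigma},\varphi,\mathcal{O})$ (minimum over all schedulers $\sigma$) cannot be reached by a memoryless scheduler.
   Context: A nondeterministic probabilistic automaton (NPA) is a tuple $\langle \Sigma, Q, \Delta, q_0 \rangle$ with $\Sigma$ a finite alphabet, $Q$ a finite set of states, $q_0$ the initial state, and $\Delta$ mapping each state to a finite set of probability distributions over $(\Sigma \times Q) \uplus \{\mathrm{stop}\}$, where $\mathrm{stop}$ is a special termination action. A scheduler is a function $\sigma$ from finite runs of the NPA to distributions over such distributions, with $\sigma(\rho)(\nu)>0$ only if $\nu \in \Delta(\text{last state of }\rho)$; it is memoryless if $\sigma(\rho)$ depends only on the last state of $\rho$. The scheduled automaton $\mathcal{B}_{/\sigma}$ is the (possibly infinite) fully probabilistic automaton whose states are runs, with $\Delta'(\rho)(a,\rho\xrightarrow{a}q') = \sum_{\mu \in \Delta(q)} \sigma(\rho)(\mu)\cdot\mu(a,q')$ ($q$ the last state of $\rho$), and similarly for termination. On a fully probabilistic automaton with distribution $\mathbf{P}$ on complete runs (finite runs followed by termination), restrictive probabilistic opacity is defined by $\frac{1}{\mathrm{PO}^A_r(\mathcal{A},\varphi,\mathcal{O})} = \sum_{o} \mathbf{P}(\mathcal{O}=o)/\mathbf{P}(\mathbf{1}_\varphi=0\mid\mathcal{O}=o)$.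 *)

(* Defs.v *)
From HB Require Import structures.
From mathcomp Require Import all_boot all_order all_algebra.
From mathcomp Require Import boolp classical_sets reals constructive_ereal ereal esum.
Set Implicit Arguments. Unset Strict Implicit. Unset Printing Implicit Defensive.
Import Order.TTheory GRing.Theory Num.Theory.
Local Open Scope classical_set_scope.
Local Open Scope ring_scope.

Section NPA.
Variable R : realType.
Variables (Sigma Q : finType).

(** An action: [Some (a, q')] = emit letter a and go to q'; [None] = stop. *)
Definition action := option (Sigma * Q).

Definition distr := {ffun action -> R}.

Definition is_distr (mu : distr) : bool :=
  [forall x, 0 <= mu x] && (\sum_x mu x == 1).

(** Nondeterministic probabilistic automaton <Sigma, Q, Delta, q0>;
    Delta q is a finite set of distributions, represented by a
    duplicate-free list (see npa_wf). *)
Record npa := NPA { q0 : Q; Delta : Q -> seq distr }.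

Definition npa_wf (B : npa) : Prop :=
  forall q, uniq (Delta B q) /\ (forall mu, mu \in Delta B q -> is_distr mu).

(** A finite run q0 -a1-> q1 ... -an-> qn is represented by the word
    [:: (a1,q1); ...; (an,qn)] (q0 is fixed). *)
Definition run := seq (Sigma * Q).

Definition last_state (B : npa) (r : run) : Q := last (q0 B) (map snd r).

Definition scheduler := run -> distr -> R.

Definition is_scheduler (B : npa) (s : scheduler) : Prop :=
  forall r : run,
    (forall nu, 0 <= s r nu) /\
    (forall nu, 0 < s r nu -> nu \in Delta B (last_state B r)) /\
    \sum_(nu <- Delta B (last_state B r)) s r nu = 1.

Definition memoryless (B : npa) (s : scheduler) : Prop :=
  forall r r' : run, last_state B r = last_state B r' -> s r = s r'.

(** Transition function Delta' of the scheduled automaton B_/s,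
    whose states are the runs of B. *)
Definition sched_trans (B : npa) (s : scheduler) (r : run) (x : action) : R :=
  \sum_(mu <- Delta B (last_state B r)) s r mu * mu x.

Fixpoint path_prob (B : npa) (s : scheduler) (pre : run) (w : run) : R :=
  match w with
  | [::] => 1
  | x :: w' => sched_trans B s pre (Some x) * path_prob B s (rcons pre x) w'
  end.

(** P of the complete run "r followed by stop" in B_/s (complete runs of
    B_/s are in bijection with finite runs of B). *)
Definition cprob (B : npa) (s : scheduler) (r : run) : R :=
  path_prob B s [::] r * sched_trans B s r None.

Definition P_obs (B : npa) (s : scheduler) (O : run -> nat) (o : nat) : \bar R :=
  \esum_(r in [set r | O r = o]) (cprob B s r)%:E.

Definition P_notphi_obs (B : npa) (s : scheduler) (phi : pred run)
    (O : run -> nat) (o : nat) : \bar R :=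
  \esum_(r in [set r | O r = o /\ ~~ phi r]) (cprob B s r)%:E.

Definition P_notphi_given (B : npa) (s : scheduler) (phi : pred run)
    (O : run -> nat) (o : nat) : R :=
  fine (P_notphi_obs B s phi O o) / fine (P_obs B s O o).

(** Summand P(O=o) / P(1_phi=0 | O=o); observations of probability 0
    do not contribute; division by a zero conditional probability gives +oo. *)
Definition PO_term (B : npa) (s : scheduler) (phi : pred run)
    (O : run -> nat) (o : nat) : \bar R :=
  if fine (P_obs B s O o) == 0 then 0%E
  else if P_notphi_given B s phi O o == 0 then +oo%E
  else (fine (P_obs B s O o) / P_notphi_given B s phi O o)%:E.

Definition inv_PO (B : npa) (s : scheduler) (phi : pred run) (O : run -> nat)
  : \bar R := \esum_(o in [set: nat]) PO_term B s phi O o.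

(** PO^A_r(B_/s, phi, O), with 1/(+oo) = 0. *)
Definition PO (B : npa) (s : scheduler) (phi : pred run) (O : run -> nat) : R :=
  if inv_PO B s phi O is r%:E then r^-1 else 0.

End NPA.

(** Deterministic finite automata, used for regular predicates on runs. *)
Record dfa (A : finType) := DFA {
  dstate : finType;
  dinit : dstate;
  dstep : dstate -> A -> dstate;
  dfinal : pred dstate }.

Definition accepts (A : finType) (D : dfa A) : pred (seq A) :=
  fun w => @dfinal A D (foldl (@dstep A D) (@dinit A D) w).

(* Main.v *)
Require Import Defs.
From HB Require Import structures.
From mathcomp Require Import all_boot all_order all_algebra.
From mathcomp Require Import boolp classical_sets reals constructive_ereal ereal esum.
From mathcomp Require Import cardinality fsbigop.
From mathcomp Require Import lra.
Import Order.TTheory GRing.Theory Num.Theory.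
Local Open Scope classical_set_scope.
Local Open Scope ring_scope.

Lemma esum_finsupp (R : realType) (T : choiceType) (A : set T) (f : T -> R) (S : seq T) :
  uniq S -> (forall x, 0 <= f x) -> (forall x, x \notin S -> f x = 0) ->
  \esum_(x in A) (f x)%:E = (\sum_(x <- S) (if x \in A then f x else 0))%:E.
Proof.
move=> uS f0 fS.
rewrite esum_mkcond.
rewrite (_ : \esum_(i in [set: T]) _ = \esum_(i in [set` S]) (if i \in A then (f i)%:E else 0%E)); last first.
  rewrite [RHS]esum_mkcond; apply: eq_esum => i _.
  have hS : (i \in [set` S]) = (i \in S).
    by apply/idP/idP => [/set_mem|/mem_set].
  rewrite hS; case: (boolP (i \in S)) => iS //.
  by rewrite fS // if_same.
rewrite esum_fset; last 2 first.
- exact: finite_seq.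
- by move=> i _; case: ifP => // _; rewrite lee_fin.
rewrite -fsbig_seq // -sumEFin; apply: eq_bigr => i _; by case: ifP.
Qed.

Section Ex.
Variable R : realType.

Local Notation Q := (option bool).
Local Notation D := (distr R bool Q).

Definition mu0 : D := [ffun x => if x is Some (_, Some false) then 2^-1 else 0].
Definition mux : D := [ffun x => if x == Some (true, Some true) then 1 else 0].
Definition muy : D := [ffun x => if x == Some (false, Some true) then 1 else 0].
Definition mustop : D := [ffun x => if x == None then 1 else 0].

Definition Dl (q : Q) : seq D :=
  match q with None => [:: mu0] | Some false => [:: mux; muy] | Some true => [:: mustop] end.

Definition Bex : npa R bool Q := NPA None Dl.

Lemma mux_neq : mux != muy.
Proof.
apply/eqP => /(congr1 (fun f : D => f (Some (true, Some true)))).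
rewrite !ffunE /= => /eqP; by rewrite oner_eq0.
Qed.

Lemma pt_distr (a : action bool Q) : is_distr [ffun x : action bool Q => if x == a then (1:R) else 0].
Proof.
apply/andP; split.
  by apply/forallP => x; rewrite ffunE; case: ifP.
under eq_bigr do rewrite ffunE.
by rewrite -big_mkcond /= big_pred1_eq.
Qed.

Lemma d_mu0 : is_distr mu0.
Proof.
apply/andP; split.
  apply/forallP => x; rewrite ffunE; case: x => [[? [[]|]]|] //.
rewrite (bigD1 (Some (true, Some false))) //= (bigD1 (Some (false, Some false))) //=.
rewrite big1 ?addr0 ?ffunE.
  by apply/eqP; rewrite [RHS](splitr 1) mul1r.
by move=> [[[] [[]|]]|] //= _; rewrite ffunE.
Qed.

Lemma wf : npa_wf Bex.
Proof.
move=> q; split.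
  by case: q => [[]|] //=; rewrite inE mux_neq.
case: q => [[]|] /= mu; rewrite !inE.
- by move=> /eqP ->; exact: (pt_distr None).
- by move=> /orP [] /eqP ->; [exact: (pt_distr (Some (true, Some true)))|exact: (pt_distr (Some (false, Some true)))].
- by move=> /eqP ->; exact: d_mu0.
Qed.


Section Sched.
Variable s : scheduler R bool Q.
Hypothesis hs : is_scheduler Bex s.

Lemma sched1 r x : last_state Bex r = None -> sched_trans Bex s r x = mu0 x.
Proof.
move=> hr; rewrite /sched_trans hr /=.
have [_ [_]] := hs r; rewrite hr /= !big_cons !big_nil !addr0 => ->.
by rewrite mul1r.
Qed.

Lemma sched3 r x : last_state Bex r = Some true -> sched_trans Bex s r x = mustop x.
Proof.
move=> hr; rewrite /sched_trans hr /=.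
have [_ [_]] := hs r; rewrite hr /= !big_cons !big_nil !addr0 => ->.
by rewrite mul1r.
Qed.

Lemma sched2 r x : last_state Bex r = Some false ->
  sched_trans Bex s r x = s r mux * mux x + s r muy * muy x.
Proof. by move=> hr; rewrite /sched_trans hr /= !big_cons big_nil addr0. Qed.

Lemma sched2sum r : last_state Bex r = Some false -> s r mux + s r muy = 1.
Proof.
move=> hr; have [_ [_]] := hs r; by rewrite hr /= !big_cons big_nil addr0.
Qed.

Lemma st_ge0 r x : 0 <= sched_trans Bex s r x.
Proof.
case h: (last_state Bex r) => [[]|].
- by rewrite sched3 // ffunE; case: ifP.
- rewrite sched2 // !ffunE; have [h0 _] := hs r.
  by apply: addr_ge0; apply: mulr_ge0 => //; case: ifP.
- rewrite sched1 // ffunE; case: x => [[? [[]|]]|] //.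
Qed.

Lemma pp_ge0 w pre : 0 <= path_prob Bex s pre w.
Proof.
elim: w pre => [|x w IH] pre //=.
by rewrite mulr_ge0 // st_ge0.
Qed.

Lemma cprob_ge0 r : 0 <= cprob Bex s r.
Proof. by rewrite /cprob mulr_ge0 // ?pp_ge0 ?st_ge0. Qed.


Definition run2 (c d : bool) : run bool Q := [:: (c, Some false); (d, Some true)].
Definition S4 : seq (run bool Q) :=
  [:: run2 true true; run2 true false; run2 false true; run2 false false].

Lemma S4_uniq : uniq S4. Proof. by []. Qed.

Lemma supp r : r \notin S4 -> cprob Bex s r = 0.
Proof.
move: r => [|[c q] [|[d q'] rest]] hr; rewrite /cprob /=.
- by rewrite mul1r sched1 // ffunE.
- rewrite sched1 // ffunE; case: q hr => [[]|] //= hr; rewrite ?mul0r //.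
  by rewrite (sched2 _ None) // !ffunE /= !mulr0 addr0 mulr0.
- rewrite sched1 // ffunE; case: q hr => [[]|] //= hr; rewrite ?mul0r //.
  rewrite (sched2 _ (Some (d, q'))) // !ffunE /=.
  case: q' hr => [[]|] /= hr; last 2 first.
  + by case: d hr; rewrite /= !mulr0 addr0 mul0r mulr0 mul0r.
  + by case: d hr; rewrite /= !mulr0 addr0 mul0r mulr0 mul0r.
  case: rest hr => [|x rest] hr.
    by move: hr; case: c; case: d.
  rewrite /= (sched3 _ (Some x)) // ffunE /=.
  by rewrite mul0r !mulr0 mul0r.
Qed.

Lemma cprob2 c d : cprob Bex s (run2 c d) =
  2^-1 * (if d then s [:: (c, Some false)] mux else s [:: (c, Some false)] muy).
Proof.
rewrite /cprob /= sched1 // sched2 // (sched3 (run2 c d)) // !ffunE /=.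
by case: d => /=; rewrite !mulr1 !mulr0 ?addr0 ?add0r.
Qed.

Lemma esum_cprob (A : set (run bool Q)) :
  \esum_(r in A) (cprob Bex s r)%:E = (\sum_(r <- S4) (if r \in A then cprob Bex s r else 0))%:E.
Proof. by apply: esum_finsupp; [exact: S4_uniq|exact: cprob_ge0|exact: supp]. Qed.

Lemma total (A : set (run bool Q)) : (forall r, r \in S4 -> A r) ->
  \esum_(r in A) (cprob Bex s r)%:E = 1%E.
Proof.
move=> hA; rewrite esum_cprob /S4 !big_cons big_nil.
rewrite !mem_set; try by apply: hA.
rewrite !cprob2; congr (_%:E).
have e1 := sched2sum [:: (true, Some false)] erefl.
have e2 := sched2sum [:: (false, Some false)] erefl.
lra.
Qed.

End Sched.

Definition phiD : dfa (prod bool Q) :=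
  @DFA _ (option bool * bool)%type (None, false)
    (fun st a => match st.1 with None => (Some a.1, false) | Some c => (Some c, c == a.1) end)
    (fun st => st.2).

Definition Oex : run bool Q -> nat := fun _ => 0%N.

Definition s0 : scheduler R bool Q := fun r nu =>
  if last_state Bex r == Some false then
    (nu == (if head true (map fst r) then mux else muy))%:R
  else (nu == head mustop (Dl (last_state Bex r)))%:R.

Lemma s0_sched : is_scheduler Bex s0.
Proof.
move=> r; split; [|split].
- by move=> nu; rewrite /s0; case: ifP => _; rewrite ler0n.
- move=> nu; rewrite /s0 /=; case: ifP => [/eqP -> |_].
    by case: (head true _); rewrite ltr0n lt0b => /eqP ->; rewrite /= !inE eqxx ?orbT.
  rewrite ltr0n lt0b => /eqP ->; by case: (last_state Bex r) => [[]|]; rewrite /= ?inE ?eqxx.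
- rewrite /s0 /=; case h: (last_state Bex r) => [[]|] /=.
  + by rewrite big_cons big_nil eqxx addr0.
  + rewrite !big_cons big_nil addr0; case: (head true _).
      by rewrite eqxx eq_sym (negbTE mux_neq) addr0.
    by rewrite eqxx (negbTE mux_neq) add0r.
  + by rewrite big_cons big_nil eqxx addr0.
Qed.

Lemma Pobs s (hs : is_scheduler Bex s) o : P_obs Bex s Oex o = if o == 0%N then 1%E else 0%E.
Proof.
rewrite /P_obs; case: eqP => [->|ne].
  by apply: total.
by apply: esum1 => r /= h; exfalso; apply: ne.
Qed.

Lemma PO_eq s (hs : is_scheduler Bex s) :
  PO Bex s (accepts phiD) Oex = fine (P_notphi_obs Bex s (accepts phiD) Oex 0).
Proof.
set g := fine _.
have g0 : 0 <= g.
  by apply: fine_ge0; apply: esum_ge0 => r _; rewrite lee_fin cprob_ge0.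
have hg : P_notphi_given Bex s (accepts phiD) Oex 0 = g.
  by rewrite /P_notphi_given Pobs //= divr1.
have hT : forall o, PO_term Bex s (accepts phiD) Oex o =
   if o == 0%N then (if g == 0 then +oo%E else (g^-1)%:E) else 0%E.
  move=> o; rewrite /PO_term Pobs //; case: (o =P 0%N) => [->|_] /=; last by rewrite eqxx.
  by rewrite oner_eq0 hg div1r.
have hI : inv_PO Bex s (accepts phiD) Oex = if g == 0 then +oo%E else (g^-1)%:E.
  rewrite /inv_PO (eq_esum (b := fun o => if o \in [set 0%N] then
      (if g == 0 then +oo%E else (g^-1)%:E) else 0%E)); last first.
    move=> o _; rewrite hT; case: eqP => [->|ne]; first by rewrite mem_set.
    by rewrite memNset.
  rewrite -esum_mkcond esum_set1 //.
  by case: eqP => _ //; rewrite lee_fin invr_ge0.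
rewrite /PO hI; case: eqP => [->|_] //.
by rewrite invrK.
Qed.

Lemma memA r : (r \in [set r | Oex r = 0%N /\ ~~ accepts phiD r]) = ~~ accepts phiD r.
Proof.
apply/idP/idP => [/set_mem [] _ //|h].
by apply/mem_set; split.
Qed.

Lemma PO_s0 : PO Bex s0 (accepts phiD) Oex = 0.
Proof.
rewrite PO_eq; last exact: s0_sched.
rewrite /P_notphi_obs esum1 // => r /= [_ hr].
case: (boolP (r \in S4)) => hS; last by rewrite (supp _ s0_sched _ hS).
move: hS hr; rewrite !inE => /or4P [] /eqP -> hr; rewrite (cprob2 _ s0_sched) /s0 /=;
  move: hr => //= _.
- by rewrite eq_sym (negbTE mux_neq) mulr0.
- by rewrite (negbTE mux_neq) mulr0.
Qed.

Lemma PO_sm sm : is_scheduler Bex sm -> memoryless Bex sm ->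
  PO Bex sm (accepts phiD) Oex = 2^-1.
Proof.
move=> hs hm; rewrite PO_eq // /P_notphi_obs (esum_cprob _ hs) /S4 !big_cons big_nil.
rewrite !memA /= !(cprob2 _ hs).
have e1 := sched2sum _ hs [:: (true, Some false)] erefl.
have e2 : sm [:: (false, Some false)] = sm [:: (true, Some false)] by apply: hm.
rewrite e2; lra.
Qed.

End Ex.

Theorem theorem2 (R : realType) :
  exists (Sigma Q : finType) (B : npa R Sigma Q) (phi : dfa (prod Sigma Q))
         (O : run Sigma Q -> nat),
    npa_wf B /\
    (* for every scheduler, B_/s induces a probability distribution on complete runs *)
    (forall s, is_scheduler B s ->
       \esum_(r in [set: run Sigma Q]) (cprob B s r)%:E = 1%E) /\
    (* the minimum over all schedulers is attained by some scheduler s0 ... *)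
    exists s0, is_scheduler B s0 /\
      (forall s, is_scheduler B s -> PO B s0 (accepts phi) O <= PO B s (accepts phi) O) /\
      (* ... but by no memoryless scheduler *)
      (forall sm, is_scheduler B sm -> memoryless B sm ->
         PO B s0 (accepts phi) O < PO B sm (accepts phi) O).
Proof.
exists bool, (option bool), (Bex R), phiD, Oex.
split; first exact: wf.
split; first by move=> s hs; apply: total.
exists (s0 R); split; first exact: s0_sched.
split.
- move=> s hs; rewrite PO_s0 (@PO_eq R s hs); apply: fine_ge0; apply: esum_ge0 => r _.
  by rewrite lee_fin (@cprob_ge0 R s hs).
- move=> sm hs hm; rewrite PO_s0 (@PO_sm R sm hs hm).
  by rewrite invr_gt0 ltr0n.
Qed.
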